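(* For $j=1,2$, let $G_j$ be a 2-step stratified Lie group with Lie algebra $\mathfrak{g}_j=\mathfrak{v}_j\oplus\mathfrak{z}_j$ and let $L_j$ be a sublaplacian on $G_j$ such that $(G_j,L_j)$ satisfies Assumption (A). Suppose $\dim\mathfrak{z}_1=\dim\mathfrak{z}_2$, and let $\phi:\mathfrak{z}_1\to\mathfrak{z}_2$ be a linear isomorphism. Let $G$ be the quotient of $G_1\times G_2$ obtained by identifying the centers via $\phi$, i.e. the connected simply connected group with Lie algebra $\mathfrak{v}_1\times\mathfrak{v}_2\times\mathfrak{z}_2$ and bracket $[(v_1,v_2,z),(v_1',v_2',z')]=(0,0,\phi([v_1,v_1'])+[v_2,v_2'])$, and let $L=L_1^\sharp+L_2^\sharp$, where $L_j^\sharp$ is the pushforward of $L_j$ to $G$. Then $(G,L)$ satisfies Assumption (A).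
   Context: For a 2-step group with Lie algebra $\mathfrak{g}=\mathfrak{v}\oplus\mathfrak{z}$ ($\mathfrak{z}$ the center, $\mathfrak{v}$ a complement), a sublaplacian $L=-\sum_jX_j^2$ ($\{X_j\}$ a basis of $\mathfrak{v}$) determines the inner product $\langle\cdot,\cdot\rangle$ on $\mathfrak{v}$ for which $\{X_j\}$ is orthonormal. For $\eta\in\mathfrak{z}^*$, $J_\eta$ is the endomorphism of $\mathfrak{v}$ with $\eta([x,x'])=\langle J_\eta x,x'\rangle$. Assumption (A): there exist integers $r_1,\dots,r_k>0$ and an orthogonal decomposition $\mathfrak{v}=\mathfrak{v}_1\oplus\dots\oplus\mathfrak{v}_k$ with orthogonal projections $P_j$ such that for all $\eta\in\mathfrak{z}^*\setminus\{0\}$ and all $j$, $J_\eta P_j=P_jJ_\eta$ and $J_\eta^2P_j$ has rank $2r_j$ and a unique nonzero eigenvalue. The pushforward $L_j^\sharp$ is the left-invariant operator $-\sum_l (X_{l}^{(j)})^2$ on $G$ obtained by regarding an orthonormal basis $\{X^{(j)}_l\}$ of $\mathfrak{v}_j$ as elements of $\mathfrak{v}_1\times\mathfrak{v}_2\times\mathfrak{z}_2$. *)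

(* Defs.v *)
(* Two-step Lie algebras g = v (+) z are encoded in
   coordinates: v = 'rV[R]_n with the orthonormal basis {X_j} of the
   sublaplacian mapped to the standard basis (so the sublaplacian inner
   product is the standard dot product), z = 'rV[R]_m, and the Lie bracket
   v x v -> z is a function br.  Linear maps act on row vectors on the right:
   the endomorphism T is encoded by the matrix M with T x = x *m M, hence the
   composition T1 o T2 is encoded by M2 *m M1. *)
From HB Require Import structures.
From mathcomp Require Import all_boot all_order all_algebra.
From mathcomp Require Import reals.
Set Implicit Arguments.
Unset Strict Implicit.
Unset Printing Implicit Defensive.
Import Order.TTheory GRing.Theory Num.Theory.
Local Open Scope ring_scope.

Section Defs.
Variable R : realType.

Definition dotv (n : nat) (u w : 'rV[R]_n) : R := (u *m w^T) 0 0.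

Definition ebas (n : nat) (i : 'I_n) : 'rV[R]_n := delta_mx 0 i.

(* br is the bracket of a 2-step stratified Lie algebra v (+) z
   (v = R^n, z = R^m) whose center is exactly z:
   bilinear, alternating, [v,v] spans z, z <> 0, and no nonzero element of v
   is central. *)
Definition two_step_strat (n m : nat) (br : 'rV[R]_n -> 'rV[R]_n -> 'rV[R]_m)
  : Prop :=
  (forall (a : R) x y w, br (a *: x + y) w = a *: br x w + br y w) /\
  (forall (a : R) x y w, br w (a *: x + y) = a *: br w x + br w y) /\
  (forall x, br x x = 0) /\
  (forall z : 'rV[R]_m, exists c : 'I_n -> 'I_n -> R,
      z = \sum_(i < n) \sum_(j < n) c i j *: br (ebas i) (ebas j)) /\
  (0 < m)%N /\
  (forall x, (forall y, br x y = 0) -> x = 0).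

(* J_eta, for eta in z^* (identified with 'rV_m via the dual basis,
   eta(z) = dotv z eta): the endomorphism of v with
   eta([x,x']) = < J_eta x, x' >, i.e. x *m Jmat br eta = J_eta x. *)
Definition Jmat (n m : nat) (br : 'rV[R]_n -> 'rV[R]_n -> 'rV[R]_m)
  (eta : 'rV[R]_m) : 'M[R]_n :=
  \matrix_(i < n, j < n) dotv (br (ebas i) (ebas j)) eta.

(* Assumption (A).  The orthogonal decomposition v = v_1 (+) ... (+) v_k is
   given through its orthogonal projections P_j (symmetric idempotents,
   pairwise orthogonal, summing to the identity). *)
Definition assumptionA (n m : nat) (br : 'rV[R]_n -> 'rV[R]_n -> 'rV[R]_m)
  : Prop :=
  exists (k : nat) (r : 'I_k -> nat) (P : 'I_k -> 'M[R]_n),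
    (forall j, 0 < r j)%N /\
    (forall j, (P j)^T = P j) /\
    (forall j, P j *m P j = P j) /\
    (forall i j, i != j -> P i *m P j = 0) /\
    \sum_(j < k) P j = 1%:M /\
    forall eta : 'rV[R]_m, eta != 0 -> forall j : 'I_k,
          let J := Jmat br eta in
          let A := P j *m (J *m J) in   (* encodes J_eta^2 P_j *)
          [/\ P j *m J = J *m P j,
              \rank A = (2 * r j)%N &
              exists lam : R, [/\ lam != 0, eigenvalue A lam &
                  forall mu : R, mu != 0 -> eigenvalue A mu -> mu = lam]].

(* Bracket of the quotient of G1 x G2 identifying the centers via phi:
   on v1 x v2 = 'rV_(n1 + n2),
   [(v1,v2),(v1',v2')] = phi([v1,v1']) + [v2,v2'], phi z = z *m Phi. *)
Definition glued_br (n1 n2 m : nat)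
  (br1 : 'rV[R]_n1 -> 'rV[R]_n1 -> 'rV[R]_m)
  (br2 : 'rV[R]_n2 -> 'rV[R]_n2 -> 'rV[R]_m) (Phi : 'M[R]_m)
  (x y : 'rV[R]_(n1 + n2)) : 'rV[R]_m :=
  br1 (lsubmx x) (lsubmx y) *m Phi + br2 (rsubmx x) (rsubmx y).

End Defs.

(* Main.v *)
Require Import Defs.
From HB Require Import structures.
From mathcomp Require Import all_boot all_order all_algebra.
From mathcomp Require Import reals.
Set Implicit Arguments.
Unset Strict Implicit.
Unset Printing Implicit Defensive.
Import Order.TTheory GRing.Theory Num.Theory.
Local Open Scope ring_scope.

Section H.
Variable R : realType.

Lemma ebas_l n1 n2 (i : 'I_n1) : ebas R (lshift n2 i) = row_mx (ebas R i) 0.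
Proof.
apply/matrixP => a b; rewrite /ebas !mxE.
case: (split_ordP b) => b' ->; rewrite ?row_mxEl ?row_mxEr !mxE ?eq_lshift ?eq_lrshift //.
by rewrite ?eq_rlshift ?eq_lrshift andbF.
Qed.

Lemma ebas_r n1 n2 (i : 'I_n2) : ebas R (rshift n1 i) = row_mx 0 (ebas R i).
Proof.
apply/matrixP => a b; rewrite /ebas !mxE.
case: (split_ordP b) => b' ->; rewrite ?row_mxEl ?row_mxEr !mxE ?eq_rshift ?eq_rlshift //.
by rewrite ?eq_rlshift ?eq_lrshift andbF.
Qed.

Lemma br0l n m (br : 'rV[R]_n -> 'rV[R]_n -> 'rV[R]_m) w :
  two_step_strat br -> br 0 w = 0.
Proof.
case=> H1 _; have := H1 1 0 0 w; rewrite !scale1r addr0.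
by move=> h; apply: (addrI (br 0 w)); rewrite addr0 -h.
Qed.

Lemma br0r n m (br : 'rV[R]_n -> 'rV[R]_n -> 'rV[R]_m) w :
  two_step_strat br -> br w 0 = 0.
Proof.
case=> _ [H1 _]; have := H1 1 0 0 w; rewrite !scale1r addr0.
by move=> h; apply: (addrI (br w 0)); rewrite addr0 -h.
Qed.

Lemma dotv0 n (w : 'rV[R]_n) : dotv 0 w = 0.
Proof. by rewrite /dotv mul0mx mxE. Qed.

Lemma dotvD n (u v w : 'rV[R]_n) : dotv (u + v) w = dotv u w + dotv v w.
Proof. by rewrite /dotv mulmxDl mxE. Qed.

Lemma dotvPhi m (z eta : 'rV[R]_m) (Phi : 'M[R]_m) :
  dotv (z *m Phi) eta = dotv z (eta *m Phi^T).
Proof. by rewrite /dotv trmx_mul trmxK mulmxA. Qed.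

Lemma Jglued n1 n2 m (br1 : 'rV[R]_n1 -> 'rV[R]_n1 -> 'rV[R]_m)
  (br2 : 'rV[R]_n2 -> 'rV[R]_n2 -> 'rV[R]_m) (Phi : 'M[R]_m) (eta : 'rV[R]_m) :
  two_step_strat br1 -> two_step_strat br2 ->
  Jmat (glued_br br1 br2 Phi) eta =
  block_mx (Jmat br1 (eta *m Phi^T)) 0 0 (Jmat br2 eta).
Proof.
move=> h1 h2; apply/matrixP => i j; rewrite /Jmat /glued_br.
case: (split_ordP i) => i' ->; case: (split_ordP j) => j' ->;
  rewrite ?block_mxEul ?block_mxEur ?block_mxEdl ?block_mxEdr [LHS]mxE [RHS]mxE
    ?ebas_l ?ebas_r ?row_mxKl ?row_mxKr ?(br0l _ h1) ?(br0r _ h1) ?(br0l _ h2) ?(br0r _ h2)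
    ?mul0mx ?addr0 ?add0r ?dotv0 ?dotvPhi //.
Qed.

Lemma eig_block n1 n2 (A : 'M[R]_n1) (B : 'M[R]_n2) mu :
  eigenvalue (block_mx A 0 0 B) mu = eigenvalue A mu || eigenvalue B mu.
Proof.
apply/eigenvalueP/orP.
- case=> v; rewrite -[v]hsubmxK mul_row_block !mulmx0 addr0 add0r scale_row_mx.
  move=> /eq_row_mx [h1 h2] nz.
  have [z|nz1] := eqVneq (lsubmx v) 0.
    right; apply/eigenvalueP; exists (rsubmx v) => //.
    by apply: contraNneq nz => z2; rewrite z z2 row_mx0.
  by left; apply/eigenvalueP; exists (lsubmx v).
- case=> /eigenvalueP [v h nz].
  + exists (row_mx v 0); last by rewrite row_mx_eq0 negb_and nz.
    by rewrite mul_row_block !mulmx0 mul0mx !addr0 h scale_row_mx scaler0.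
  + exists (row_mx 0 v); last by rewrite row_mx_eq0 negb_and nz orbT.
    by rewrite mul_row_block !mul0mx !mulmx0 !addr0 add0r h scale_row_mx scaler0.
Qed.

Lemma eig0 n mu : mu != 0 -> eigenvalue (0 : 'M[R]_n) mu = false.
Proof.
move=> nz; apply/eigenvalueP => -[v]; rewrite mulmx0 => /esym/eqP.
by rewrite scaler_eq0 (negPf nz) /= => ->.
Qed.

Lemma split_l k1 k2 (i : 'I_k1) : split (lshift k2 i) = inl i.
Proof. by rewrite -[lshift k2 i]/(unsplit (inl i)) unsplitK. Qed.
Lemma split_r k1 k2 (i : 'I_k2) : split (rshift k1 i) = inr i.
Proof. by rewrite -[rshift k1 i]/(unsplit (inr i)) unsplitK. Qed.

Lemma sum_block a b c d k (F : 'I_k -> 'M[R]_(a, c)) (G : 'I_k -> 'M[R]_(a, d))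
  (H : 'I_k -> 'M[R]_(b, c)) (K : 'I_k -> 'M[R]_(b, d)) :
  \sum_(i < k) block_mx (F i) (G i) (H i) (K i) =
  block_mx (\sum_(i < k) F i) (\sum_(i < k) G i) (\sum_(i < k) H i) (\sum_(i < k) K i).
Proof.
elim: k F G H K => [|k IH] F G H K; first by rewrite !big_ord0 block_mx0.
by rewrite !big_ord_recr /= IH add_block_mx.
Qed.
End H.

Theorem proposition6p2 (R : realType) (n1 n2 m : nat)
  (br1 : 'rV[R]_n1 -> 'rV[R]_n1 -> 'rV[R]_m)
  (br2 : 'rV[R]_n2 -> 'rV[R]_n2 -> 'rV[R]_m) (Phi : 'M[R]_m) :
  two_step_strat br1 -> assumptionA br1 ->
  two_step_strat br2 -> assumptionA br2 ->
  Phi \in unitmx ->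
  assumptionA (glued_br br1 br2 Phi).
Proof.
move=> S1 [k1 [r1 [P1 [r1p [P1t [P1i [P1o [P1s H1]]]]]]]].
move=> S2 [k2 [r2 [P2 [r2p [P2t [P2i [P2o [P2s H2]]]]]]]] U.
exists (k1 + k2)%N, (fun j => match split j with inl a => r1 a | inr b => r2 b end),
  (fun j => match split j with inl a => block_mx (P1 a) 0 0 (0 : 'M[R]_n2)
                             | inr b => block_mx (0 : 'M[R]_n1) 0 0 (P2 b) end).
split; [|split; [|split; [|split; [|split]]]].
- by move=> j; case: (split j).
- by move=> j; case: (split j) => a; rewrite tr_block_mx !trmx0 ?P1t ?P2t.
- by move=> j; case: (split j) => a;
    rewrite mulmx_block !mulmx0 !mul0mx !addr0 ?add0r ?P1i ?P2i.
- move=> i j ne; case Hi: (split i) => [a|a]; case Hj: (split j) => [b|b];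
    rewrite mulmx_block !mulmx0 !mul0mx !addr0 ?add0r ?block_mx0 //.
  + rewrite P1o ?block_mx0 //.
    by move: ne; rewrite -(splitK i) -(splitK j) Hi Hj /= eq_lshift.
  + rewrite P2o ?block_mx0 //.
    by move: ne; rewrite -(splitK i) -(splitK j) Hi Hj /= eq_rshift.
- rewrite big_split_ord /=.
  rewrite (eq_bigr (fun i => block_mx (P1 i) 0 0 (0 : 'M[R]_n2))); last first.
    by move=> i _; rewrite split_l.
  rewrite [X in _ + X](eq_bigr (fun i => block_mx (0 : 'M[R]_n1) 0 0 (P2 i))); last first.
    by move=> i _; rewrite split_r.
  rewrite !sum_block !big1_eq add_block_mx P1s P2s addr0 add0r.
  by rewrite !add0r -scalar_mx_block.
- move=> eta ne j.
  have U' : Phi^T \in unitmx by rewrite unitmx_tr.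
  have ne1 : eta *m Phi^T != 0.
    apply: contraNneq ne => h; apply/eqP.
    by rewrite -(mulmxK U' eta) h mul0mx.
  cbv zeta; rewrite (Jglued Phi eta S1 S2).
  case Hj: (split j) => [a|a].
  + have := H1 _ ne1 a; cbv zeta => -[comm rk [lam [lnz le lu]]].
    rewrite !mulmx_block !mulmx0 !mul0mx !addr0 ?add0r ?mulmx0 ?mul0mx ?addr0 ?add0r.
    split.
    * by rewrite comm.
    * by rewrite ?mulmx0 rank_diag_block_mx mxrank0 addn0.
    * exists lam; split => //; first by rewrite eig_block le.
      by move=> mu mnz; rewrite eig_block eig0 // orbF; apply: lu.
  + have := H2 _ ne a; cbv zeta => -[comm rk [lam [lnz le lu]]].
    rewrite !mulmx_block !mulmx0 !mul0mx !addr0 ?add0r ?mulmx0 ?mul0mx ?addr0 ?add0r.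
    split.
    * by rewrite comm.
    * by rewrite rank_diag_block_mx mxrank0 add0n.
    * exists lam; split => //; first by rewrite eig_block le orbT.
      by move=> mu mnz; rewrite eig_block eig0 //; apply: lu.
Qed.
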